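(* Fix a binary instance $(\mu_0,\hat q)$. There is a constant $C<\infty$, depending only on $(\mu_0,\hat q)$, with the following property. For every horizon $T\ge 2$ and every bias $\alpha^\star\in(0,1]$, the Binary Search policy satisfies $\mathrm{Reg}_T(\mathrm{BS};\alpha^\star)\le C\log T$. More precisely, suppose $\alpha^\star\ge\alpha_{\min}$, and write $\nu^\star=\nu_B(\alpha^\star)$, $L_\nu=\frac{(1-\mu_0)^2}{\hat q-\mu_0}$ and $L_W=\frac{\mu_0(1-\mu_0)^2}{\hat q-\mu_0}$. Then $$\mathrm{Reg}_T\le \lceil 2\log_2T\rceil+\frac{L_\nu(1-\alpha_{\min})}{\nu^\star}+L_W(1-\alpha_{\min}).$$ If instead $\alpha^\star<\alpha_{\min}$, the regret is $0$.
   Context: Binary model: states $\Omega=\{0,1\}$, actions $A=\{0,1\}$, prior $\mu_0=\Pr(\omega=1)\in(0,1)$, cutoff $\hat q\in(\mu_0,1)$, sender utility $u_S(a,\omega)=\mathbf 1\{a=1\}$. A receiver with fixed bias $\alpha^\star\in(0,1]$, unknown to the sender, takes action $1$ after Bayesian posterior $\nu=\Pr(\omega=1\mid s)$ iff $(1-\alpha^\star)\mu_0+\alpha^\star\nu\ge\hat q$. Define $\nu_B(\alpha)=\mu_0+(\hat q-\mu_0)/\alpha$ and $\alpha_{\min}=(\hat q-\mu_0)/(1-\mu_0)$. For $\alpha\in[\alpha_{\min},1]$, let $\tau(\alpha)$ be the Bayes-plausible scheme with mass $1-\mu_0/\nu_B(\alpha)$ on posterior $0$ and mass $\mu_0/\nu_B(\alpha)$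 on posterior $\nu_B(\alpha)$. Repeated interaction over $T$ rounds. In each round $t$: - The sender commits to a Bayes-plausible posterior distribution (a mean-$\mu_0$ distribution on $[0,1]$). - The state $\omega_t\sim\mu_0$ is drawn and a posterior $\nu_t$ is realized from the committed distribution, consistently with $\omega_t$. - The receiver acts, and the sender observes $\nu_t$ and the action. Let $\mathrm{OPT}(\alpha^\star)$ be the supremum, over Bayes-plausible distributions, of the probability that the realized posterior induces action $1$. The regret is $\mathrm{Reg}_T=T\cdot\mathrm{OPT}(\alpha^\star)-\sum_{t=1}^T\mathbb E[\Pr(\text{action }1\text{ in round }t\mid\text{history})]$. Binary Search (BS) policy: initialize $[\underline\alpha,\overline\alpha]=[\alpha_{\min},1]$, $k=0$, and $M=\lceil 2\log_2T\rceil$. While $k<M$ and rounds remain, set $m$ to the midpoint of $[\underline\alpha,\overline\alpha]$ and play $\tau(m)$. Whenever the realized posterior is nonzero: - if the receiver chooses action $1$, set $\underline\alpha\gets m$; otherwise set $\overline\alpha\gets m$; - then increment $k$. Afterwards, play $\tau(\underline\alpha)$ in all remaining rounds. *)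

(* Defs.v *)
From HB Require Import structures.
From mathcomp Require Import all_boot all_order all_algebra.
From mathcomp Require Import all_classical all_reals all_analysis.
Set Implicit Arguments. Unset Strict Implicit. Unset Printing Implicit Defensive.
Import Order.TTheory GRing.Theory Num.Theory.
Local Open Scope ring_scope.
Local Open Scope classical_set_scope.

Section BinaryModel.
Context {R : realType}.
Variables (mu0 qhat : R).

Definition nuB (a : R) : R := mu0 + (qhat - mu0) / a.

Definition alpha_min : R := (qhat - mu0) / (1 - mu0).

Definition acts1 (a nu : R) : bool := qhat <= (1 - a) * mu0 + a * nu.

Definition bayes_plausible (P : probability R R) : Prop :=
  P `[0, 1] = 1%E /\ (\int[P]_x (x%:E) = mu0%:E)%E.

Definition OPT (a : R) : \bar R :=
  ereal_sup [set P [set nu | acts1 a nu] | P in bayes_plausible].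

(* tau(m): mass mu0/nuB(m) on posterior nuB(m), the rest on posterior 0 *)
Definition tau_mass (m : R) : R := mu0 / nuB m.

Definition round_prob (a m : R) : R :=
  tau_mass m * (acts1 a (nuB m))%:R + (1 - tau_mass m) * (acts1 a 0)%:R.

(* Expected sum, over the remaining n rounds, of Pr(action 1 | history)
   under the Binary Search policy with parameter M, current interval
   [lo, hi] and counter k.  With probability tau_mass m the realized
   posterior is nonzero; then (if k < M) the interval is updated according
   to the receiver's action and k is incremented. *)
Fixpoint bs_value (a : R) (M n : nat) (lo hi : R) (k : nat) : R :=
  match n with
  | 0 => 0
  | n'.+1 =>
    let m := if (k < M)%N then (lo + hi) / 2 else lo in
    let p := tau_mass m in
    let next :=
      if (k < M)%N then
        (if acts1 a (nuB m) then bs_value a M n' m hi k.+1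
         else bs_value a M n' lo m k.+1)
      else bs_value a M n' lo hi k in
    round_prob a m + p * next + (1 - p) * bs_value a M n' lo hi k
  end.

Definition BS_M (T : nat) : nat := absz (Num.ceil (2 * (ln (T%:R : R) / ln 2))).

Definition BS_reward (a : R) (T : nat) : R :=
  bs_value a (BS_M T) T alpha_min 1 0.

Definition regret (a : R) (T : nat) : \bar R :=
  ((T%:R : R)%:E * OPT a - (BS_reward a T)%:E)%E.

Definition L_nu : R := (1 - mu0) ^+ 2 / (qhat - mu0).
Definition L_W : R := mu0 * (1 - mu0) ^+ 2 / (qhat - mu0).

End BinaryModel.

(* Main.v *)
Require Import Defs.
From HB Require Import structures.
From mathcomp Require Import all_boot all_order all_algebra.
From mathcomp Require Import all_classical all_reals all_analysis.
From mathcomp Require Import ring lra measurable_realfun.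
Import Order.TTheory GRing.Theory Num.Theory.
Local Open Scope ring_scope.
Set Implicit Arguments. Unset Strict Implicit.

Ltac fixg := match goal with
 | |- is_true (?a < ?b) => change (a < b)
 | |- is_true (?a <= ?b) => change (a <= b)
 end.
Ltac L := try fixg; lra.
Ltac N := try fixg; nra.
Ltac nz := match goal with H : is_true (0 < ?x) |- is_true (?y != 0) => exact: (lt0r_neq0 H) end.

Lemma amin_E (R : realType) (mu0 qhat : R) (h0 : 0 < mu0) (h1 : mu0 < qhat) (h2 : qhat < 1) :
  alpha_min mu0 qhat * (1 - mu0) = qhat - mu0.
Proof. have m1 : 0 < 1 - mu0 by L. rewrite /alpha_min; field; nz. Qed.

Lemma amin_gt0 (R : realType) (mu0 qhat : R) (h0 : 0 < mu0) (h1 : mu0 < qhat) (h2 : qhat < 1) :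
  0 < alpha_min mu0 qhat.
Proof. rewrite /alpha_min; apply: divr_gt0; L. Qed.

Lemma amin_lt1 (R : realType) (mu0 qhat : R) (h0 : 0 < mu0) (h1 : mu0 < qhat) (h2 : qhat < 1) :
  alpha_min mu0 qhat < 1.
Proof. rewrite /alpha_min ltr_pdivrMr; L. Qed.

Lemma nuB_E (R : realType) (mu0 qhat : R) x : 0 < x ->
  nuB mu0 qhat x = (mu0 * x + (qhat - mu0)) / x.
Proof. move=> x0; rewrite /nuB; field; nz. Qed.

Lemma g_gt0 (R : realType) (mu0 qhat : R) (h0 : 0 < mu0) (h1 : mu0 < qhat) x :
  0 < x -> 0 < mu0 * x + (qhat - mu0).
Proof. move=> x0; N. Qed.

Lemma tau_E (R : realType) (mu0 qhat : R) (h0 : 0 < mu0) (h1 : mu0 < qhat) x : 0 < x ->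
  tau_mass mu0 qhat x = mu0 * x / (mu0 * x + (qhat - mu0)).
Proof.
move=> x0; rewrite /tau_mass nuB_E //; have gx := g_gt0 h0 h1 x0; field.
apply/andP; split; nz.
Qed.

Ltac fz := repeat (apply/andP; split); nz.

Lemma acts1_nuB (R : realType) (mu0 qhat : R) (h0 : 0 < mu0) (h1 : mu0 < qhat) a m :
  0 < a -> 0 < m -> acts1 mu0 qhat a (nuB mu0 qhat m) = (m <= a).
Proof.
move=> a0 m0; rewrite /acts1 /nuB.
set t := (qhat - mu0) / m.
have tm : t * m = qhat - mu0 by rewrite /t; field; nz.
have t0 : 0 < t by rewrite /t; apply: divr_gt0 => //; L.
apply/idP/idP => H; N.
Qed.

Lemma acts1_0 (R : realType) (mu0 qhat : R) (h0 : 0 < mu0) (h1 : mu0 < qhat) a :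
  0 <= a -> a <= 1 -> acts1 mu0 qhat a 0 = false.
Proof. move=> a0 a1; rewrite /acts1; apply/negbTE; rewrite -ltNge; N. Qed.

Lemma tau_ge0 (R : realType) (mu0 qhat : R) (h0 : 0 < mu0) (h1 : mu0 < qhat) x :
  0 < x -> 0 <= tau_mass mu0 qhat x.
Proof. move=> x0; rewrite tau_E //; have gx := g_gt0 h0 h1 x0.
apply: divr_ge0; N. Qed.

Lemma tau_le1 (R : realType) (mu0 qhat : R) (h0 : 0 < mu0) (h1 : mu0 < qhat) x :
  0 < x -> tau_mass mu0 qhat x <= 1.
Proof. move=> x0; rewrite tau_E //; have gx := g_gt0 h0 h1 x0.
rewrite ler_pdivrMr //; L. Qed.

Lemma tau_diff (R : realType) (mu0 qhat : R) (h0 : 0 < mu0) (h1 : mu0 < qhat) m a :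
  0 < m -> 0 < a ->
  tau_mass mu0 qhat a - tau_mass mu0 qhat m
  = mu0 * (qhat - mu0) * (a - m) / ((mu0 * a + (qhat - mu0)) * (mu0 * m + (qhat - mu0))).
Proof.
move=> m0 a0; rewrite !tau_E //; have gm := g_gt0 h0 h1 m0; have ga := g_gt0 h0 h1 a0.
field; fz.
Qed.

Lemma tau_mono (R : realType) (mu0 qhat : R) (h0 : 0 < mu0) (h1 : mu0 < qhat) m a :
  0 < m -> m <= a -> tau_mass mu0 qhat m <= tau_mass mu0 qhat a.
Proof.
move=> m0 ma; have a0 : 0 < a by L.
rewrite -subr_ge0 tau_diff //; have gm := g_gt0 h0 h1 m0; have ga := g_gt0 h0 h1 a0.
have hd : 0 < qhat - mu0 by L.
have p1 : 0 <= mu0 * (qhat - mu0) by N.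
have num : 0 <= mu0 * (qhat - mu0) * (a - m) by N.
have den : 0 < (mu0 * a + (qhat - mu0)) * (mu0 * m + (qhat - mu0)) by N.
exact: divr_ge0 num (ltW den).
Qed.

Lemma g_ge (R : realType) (mu0 qhat : R) (h0 : 0 < mu0) (h1 : mu0 < qhat) (h2 : qhat < 1) x :
  alpha_min mu0 qhat <= x -> (qhat - mu0) / (1 - mu0) <= mu0 * x + (qhat - mu0).
Proof.
move=> hx; have E := amin_E h0 h1 h2.
rewrite ler_pdivrMr; last L.
have : alpha_min mu0 qhat * (1 - mu0) <= x * (1 - mu0) by apply: ler_wpM2r; L.
N.
Qed.

Lemma tauLW (R : realType) (mu0 qhat : R) (h0 : 0 < mu0) (h1 : mu0 < qhat) (h2 : qhat < 1) m a :
  alpha_min mu0 qhat <= m -> m <= a ->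
  tau_mass mu0 qhat a - tau_mass mu0 qhat m <= L_W mu0 qhat * (a - m).
Proof.
move=> hm ma; have a0 := amin_gt0 h0 h1 h2; have dd : 0 < qhat - mu0 by L.
have m0 : 0 < m by L. have a0' : 0 < a by L.
rewrite tau_diff //.
have ga := g_ge h0 h1 h2 (le_trans hm ma); have gm := g_ge h0 h1 h2 hm.
set c := (qhat - mu0) / (1 - mu0) in ga gm.
have m1 : 0 < 1 - mu0 by L.
have c0 : 0 < c by rewrite /c; apply: divr_gt0; L.
have -> : L_W mu0 qhat * (a - m) = mu0 * (qhat - mu0) * (a - m) / (c * c).
  rewrite /L_W /c; field; fz.
have p1 : 0 <= mu0 * (qhat - mu0) by N.
have e0 : 0 <= mu0 * (qhat - mu0) * (a - m) by N.
have gp : 0 < (mu0 * a + (qhat - mu0)) * (mu0 * m + (qhat - mu0)) by N.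
have cp : 0 < c * c by N.
rewrite ler_pdivrMr //.
set X := mu0 * (qhat - mu0) * (a - m).
have Y0 : 0 <= X / (c * c) by apply: divr_ge0 => //; exact: ltW.
rewrite {1}(_ : X = X / (c * c) * (c * c)); last by field; fz.
apply: ler_wpM2l => //.
apply: ler_pM; L.
Qed.

Lemma tauK (R : realType) (mu0 qhat : R) (h0 : 0 < mu0) (h1 : mu0 < qhat) (h2 : qhat < 1) m a :
  alpha_min mu0 qhat <= m -> m <= a ->
  tau_mass mu0 qhat a - tau_mass mu0 qhat m
  <= tau_mass mu0 qhat m * (L_nu mu0 qhat / nuB mu0 qhat a) * (a - m).
Proof.
move=> hm ma; have a0 := amin_gt0 h0 h1 h2; have dd : 0 < qhat - mu0 by L.
have m0 : 0 < m by L. have a0' : 0 < a by L.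
have ga := g_gt0 h0 h1 a0'; have gm := g_gt0 h0 h1 m0.
rewrite tau_diff // nuB_E // tau_E //.
set F := mu0 * (a - m) / ((mu0 * a + (qhat - mu0)) * (mu0 * m + (qhat - mu0))).
have gp : 0 < (mu0 * a + (qhat - mu0)) * (mu0 * m + (qhat - mu0)) by N.
have F0 : 0 <= F by rewrite /F; apply: divr_ge0; [N | exact: ltW].
have -> : mu0 * (qhat - mu0) * (a - m) / ((mu0 * a + (qhat - mu0)) * (mu0 * m + (qhat - mu0)))
   = F * (qhat - mu0) by rewrite /F; field; fz.
have -> : mu0 * m / (mu0 * m + (qhat - mu0)) * (L_nu mu0 qhat / ((mu0 * a + (qhat - mu0)) / a)) * (a - m)
   = F * (m * a * (1 - mu0)^+2 / (qhat - mu0)) by rewrite /F /L_nu; field; fz.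
apply: ler_wpM2l => //.
rewrite ler_pdivlMr //.
have E := amin_E h0 h1 h2.
have h3 : alpha_min mu0 qhat * (1 - mu0) <= m * (1 - mu0) by apply: ler_wpM2r; L.
have h4 : alpha_min mu0 qhat * (1 - mu0) <= a * (1 - mu0) by apply: ler_wpM2r; L.
rewrite E in h3 h4.
have : (qhat - mu0) * (qhat - mu0) <= (m * (1 - mu0)) * (a * (1 - mu0)) by apply: ler_pM; L.
rewrite expr2; N.
Qed.

Lemma bs_S (R : realType) (mu0 qhat : R) a M n lo hi k :
  bs_value mu0 qhat a M n.+1 lo hi k =
  let m := if (k < M)%N then (lo + hi) / 2 else lo in
  round_prob mu0 qhat a m + tau_mass mu0 qhat m *
    (if (k < M)%N then
       (if acts1 mu0 qhat a (nuB mu0 qhat m) then bs_value mu0 qhat a M n m hi k.+1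
        else bs_value mu0 qhat a M n lo m k.+1)
     else bs_value mu0 qhat a M n lo hi k)
  + (1 - tau_mass mu0 qhat m) * bs_value mu0 qhat a M n lo hi k.
Proof. by []. Qed.

Lemma bs_bound (R : realType) (mu0 qhat : R) (h0 : 0 < mu0) (h1 : mu0 < qhat) (h2 : qhat < 1)
  a (ha1 : alpha_min mu0 qhat <= a) (ha2 : a <= 1) (M : nat) n :
  forall lo hi k, alpha_min mu0 qhat <= lo -> lo <= a -> a <= hi -> hi <= 1 -> (k <= M)%N ->
  hi - lo <= (1 - alpha_min mu0 qhat) / 2 ^+ k ->
  n%:R * tau_mass mu0 qhat a - bs_value mu0 qhat a M n lo hi k
  <= (M - k)%:R + (L_nu mu0 qhat / nuB mu0 qhat a) * (hi - lo)
     + n%:R * (L_W mu0 qhat * (1 - alpha_min mu0 qhat) / 2 ^+ M).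
Proof.
have am0 := amin_gt0 h0 h1 h2; have am1 := amin_lt1 h0 h1 h2.
have a0 : 0 < a by L.
have dd : 0 < qhat - mu0 by L.
have m1 : 0 < 1 - mu0 by L.
set K := L_nu mu0 qhat / nuB mu0 qhat a.
set E := L_W mu0 qhat * (1 - alpha_min mu0 qhat) / 2 ^+ M.
have nuBa : 0 < nuB mu0 qhat a.
  rewrite nuB_E //; apply: divr_gt0 => //; exact: g_gt0.
have K0 : 0 <= K.
  rewrite /K /L_nu; apply: divr_ge0; last exact: ltW.
  apply: divr_ge0; last exact: ltW. exact: exprn_ge0 (ltW m1).
have LW0 : 0 <= L_W mu0 qhat.
  rewrite /L_W; apply: divr_ge0; last exact: ltW.
  apply: mulr_ge0; [exact: ltW | exact: exprn_ge0 (ltW m1)].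
have twoM : 0 < (2 : R) ^+ M by apply: exprn_gt0.
have E0 : 0 <= E.
  rewrite /E; apply: divr_ge0; last exact: ltW.
  by apply: mulr_ge0 => //; L.
elim: n => [|n IH] lo hi k hlo hloa hahi hhi hkM hw.
  rewrite /=.
  have : 0 <= K * (hi - lo) by apply: mulr_ge0 => //; L.
  have : 0 <= (M - k)%:R :> R by [].
  L.
have hn : (n.+1)%:R = n%:R + 1 :> R by rewrite -addn1 natrD.
rewrite bs_S hn.
have tauA := tau_ge0 h0 h1 a0.
case: (ltnP k M) => hk /=.
- set m := (lo + hi) / 2.
  have hm2 : m * 2 = lo + hi by rewrite /m; L.
  have m0 : 0 < m by L.
  have hmM : (M - k)%N = (M - k.+1).+1 by rewrite subnSK.
  have hMk : (M - k)%:R = (M - k.+1)%:R + 1 :> R by rewrite hmM -addn1 natrD.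
  rewrite hMk.
  have pg0 := tau_ge0 h0 h1 m0; have pl1 := tau_le1 h0 h1 m0.
  set p := tau_mass mu0 qhat m in pg0 pl1 *.
  have hw' : hi - lo <= (1 - alpha_min mu0 qhat) / 2 ^+ k.+1 * 2.
    have tk : 0 < (2 : R) ^+ k by apply: exprn_gt0.
    have two : 0 < (2 : R) by L.
    have -> : (1 - alpha_min mu0 qhat) / 2 ^+ k.+1 * 2 = (1 - alpha_min mu0 qhat) / 2 ^+ k.
      by rewrite exprS; field; fz.
    exact: hw.
  have IH0 := IH lo hi k hlo hloa hahi hhi (ltnW hk) hw.
  rewrite hMk in IH0.
  have q0 : 0 <= 1 - p by L.
  have P0 := ler_wpM2l q0 IH0.
  rewrite /round_prob acts1_nuB // acts1_0 //; last exact: ltW.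
  have lom : lo <= m by L.
  have mhi : m <= hi by L.
  have w1 : hi - m <= (1 - alpha_min mu0 qhat) / 2 ^+ k.+1 by L.
  have w2 : m - lo <= (1 - alpha_min mu0 qhat) / 2 ^+ k.+1 by L.
  case: (leP m a) => hma.
  + have IH1 := IH m hi k.+1 (le_trans hlo lom) hma hahi hhi hk w1.
    have P1 := ler_wpM2l pg0 IH1.
    have hK := tauK h0 h1 h2 (le_trans hlo lom) hma.
    rewrite -/p -/K in hK.
    have hK2 : p * K * (a - m) <= p * K * (hi - m).
      by apply: ler_wpM2l; [exact: mulr_ge0 | L].
    have hrel : p * K * (hi - lo) = 2 * (p * K * (hi - m)) by rewrite /m; field.
    have pe : 0 <= p * E by exact: mulr_ge0.
    rewrite -/p mulr1 mulr0 addr0.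
    L.
  + have IH1 := IH lo m k.+1 hlo hloa (ltW hma) (le_trans mhi hhi) hk w2.
    have P1 := ler_wpM2l pg0 IH1.
    have hpa : tau_mass mu0 qhat a <= p by apply: tau_mono => //; exact: ltW.
    have hK2 : p * K * (m - lo) <= p * K * (hi - lo).
      by apply: ler_wpM2l; [exact: mulr_ge0 | L].
    have pe : 0 <= p * E by exact: mulr_ge0.
    rewrite -/p !mulr0 addr0 add0r.
    L.
- have ekM : k = M by apply/eqP; rewrite eqn_leq hkM hk.
  subst k.
  have lo0 : 0 < lo by L.
  rewrite /round_prob acts1_nuB // acts1_0 //; last exact: ltW.
  rewrite hloa mulr1 mulr0 addr0.
  have IH0 := IH lo hi M hlo hloa hahi hhi hkM hw.
  have hLW := tauLW h0 h1 h2 hlo hloa.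
  have h3 : L_W mu0 qhat * (a - lo) <= L_W mu0 qhat * (hi - lo).
    by apply: ler_wpM2l => //; L.
  have h4 : L_W mu0 qhat * (hi - lo) <= E.
    by rewrite /E -mulrA; apply: ler_wpM2l.
  L.
Qed.

Local Open Scope classical_set_scope.

Lemma compl01_null (R : realType) (P : probability R R) :
  P `[0, 1] = 1%E -> P (~` `[0, 1]) = 0%E.
Proof.
move=> H; rewrite probability_setC; last exact: measurable_itv.
by rewrite H subee.
Qed.

Lemma int_abs (R : realType) (mu0 : R) (P : probability R R) :
  bayes_plausible mu0 P -> (\int[P]_x `|x|%:E = mu0%:E)%E.
Proof.
move=> [H1 H2]; rewrite -H2.
apply: (ae_eq_integral (fun x => x%:E)) => //.
- apply/measurable_EFinP; exact: normr_measurable.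
- by apply/measurable_EFinP.
- exists (~` `[0, 1]); split.
  + by apply: measurableC; exact: measurable_itv.
  + exact: compl01_null.
  + move=> x /= hx; apply: contrapT => hx'; apply: hx => _.
    move: hx' => /contrapT; rewrite in_itv /= => /andP[x0 _].
    by rewrite ger0_norm.
Qed.

Lemma mge (R : realType) (c : R) : measurable [set x : R | c <= x].
Proof.
have -> : [set x : R | c <= x] = [set` `[c, +oo[%R].
  by apply/seteqP; split => x /=; rewrite in_itv /= andbT.
exact: measurable_itv.
Qed.

Lemma markov_bp (R : realType) (mu0 : R) (P : probability R R) (c : R) :
  0 < c -> bayes_plausible mu0 P -> (c%:E * P [set x | (c <= x)%R] <= mu0%:E)%E.
Proof.
move=> c0 bp; rewrite -(int_abs bp).
rewrite -[X in (c%:E * P X)%E]setIT -integral_indic //; last exact: mge.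
rewrite -(@integralZl_indic _ _ _ P setT measurableT (fun _ => [set x : R | (c <= x)%R])) //; last 2 first.
  by move=> /ltW; rewrite leNgt c0.
  exact: mge.
apply: ge0_le_integral => //.
- move=> x _; rewrite lee_fin; apply: mulr_ge0; [exact: ltW | rewrite indicE; exact: ler0n].
- apply/measurable_EFinP; apply: measurable_funM => //.
  exact: measurable_indic (mge c).
- apply/measurable_EFinP; exact: normr_measurable.
- move=> x _; rewrite lee_fin indicE.
  case: (boolP (x \in _)) => [/set_mem /= hx|_]; last by rewrite mulr0.
  by rewrite mulr1 (le_trans hx) // ler_norm.
Qed.

Lemma acts1_set (R : realType) (mu0 qhat a : R) : 0 < a ->
  [set nu | acts1 mu0 qhat a nu] = [set x | (nuB mu0 qhat a <= x)%R].
Proof.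
move=> a0; apply/seteqP; split => x /=; rewrite /acts1 /nuB;
set t := (qhat - mu0) / a;
have ta : t * a = qhat - mu0 by rewrite /t divfK // lt0r_neq0.
- move=> H; nra.
- move=> H; nra.
Qed.

Lemma OPT_le (R : realType) (mu0 qhat a : R) : 0 < a -> 0 < nuB mu0 qhat a ->
  (OPT mu0 qhat a <= (tau_mass mu0 qhat a)%:E)%E.
Proof.
move=> a0 c0; rewrite /OPT; apply: ge_ereal_sup => _ [P bp <-].
rewrite acts1_set // /tau_mass mulrC EFinM lee_pdivlMl //.
exact: markov_bp.
Qed.

Lemma OPT_zero (R : realType) (mu0 qhat a : R) : 0 <= mu0 <= 1 -> 0 < a -> 1 < nuB mu0 qhat a ->
  OPT mu0 qhat a = 0%E.
Proof.
move=> /andP[m0 m1] a0 c1; rewrite /OPT; apply/eqP; rewrite eq_le; apply/andP; split.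
- apply: ge_ereal_sup => _ [P [bp1 bp2] <-].
  rewrite acts1_set // -(compl01_null bp1).
  apply: le_measure; rewrite ?inE.
  + exact: mge.
  + by apply: measurableC; exact: measurable_itv.
  + move=> x /= hx; rewrite in_itv /= => /andP[_ x1].
    by move: (lt_le_trans c1 (le_trans hx x1)); rewrite ltxx.
- have D1 : @dirac _ R mu0 R `[0, 1] = 1%E.
    by rewrite diracE mem_set //= in_itv /= m0 m1.
  have D2 : (\int[@dirac _ R mu0 R]_x x%:E = mu0%:E)%E.
    by rewrite integral_dirac // diracE mem_set // mul1e.
  have D3 : @dirac _ R mu0 R [set x | (nuB mu0 qhat a <= x)%R] = 0%E.
    rewrite diracE memNset //= => H.
    by have := lt_le_trans (le_lt_trans m1 c1) H; rewrite ltxx.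
  apply: le_ereal_sup_tmp; exists 0%E => //.
  exists (\d_mu0 : probability R R).
  + split; [exact: D1 | exact: D2].
  + rewrite acts1_set //; exact: D3.
Qed.


Lemma bs_zero (R : realType) (mu0 qhat : R) (h0 : 0 < mu0) (h1 : mu0 < qhat) (h2 : qhat < 1)
  a (a0 : 0 < a) (ha : a < alpha_min mu0 qhat) (M : nat) n :
  forall lo hi k, alpha_min mu0 qhat <= lo -> lo <= hi ->
  bs_value mu0 qhat a M n lo hi k = 0.
Proof.
have am0 := amin_gt0 h0 h1 h2; have am1 := amin_lt1 h0 h1 h2.
have a1 : a <= 1 by L.
elim: n => [|n IH] lo hi k hlo hlh; first by [].
rewrite bs_S; case: (ltnP k M) => hk /=.
- set m := (lo + hi) / 2.
  have lom : lo <= m by rewrite /m; L.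
  have mhi : m <= hi by rewrite /m; L.
  have m0 : 0 < m by L.
  have hma : (m <= a) = false by apply/negbTE; rewrite -ltNge; L.
  rewrite /round_prob acts1_nuB // acts1_0 //; last exact: ltW.
  rewrite hma !IH //; try exact: (le_trans hlo lom).
  by rewrite !mulr0 !addr0.
- have lo0 : 0 < lo by L.
  have hma : (lo <= a) = false by apply/negbTE; rewrite -ltNge; L.
  rewrite /round_prob acts1_nuB // acts1_0 //; last exact: ltW.
  by rewrite hma !IH // !mulr0 !addr0.
Qed.

Lemma BSM_facts (R : realType) (T : nat) : (2 <= T)%N ->
  (T%:R : R) <= 2 ^+ BS_M (R:=R) T /\
  ((BS_M (R:=R) T)%:R : R) <= 2 * (ln (T%:R : R) / ln 2) + 1 /\
  1 <= ln (T%:R : R) / ln 2.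
Proof.
move=> hT.
have l2 : 0 < ln (2 : R) by apply: ln_gt0; L.
have T2 : (2 : R) <= T%:R by rewrite ler_nat.
have T0 : (0 : R) < T%:R by L.
have lT2 : ln (2 : R) <= ln (T%:R : R).
  by rewrite ler_ln // posrE; L.
have lT0 : 0 <= ln (T%:R : R) by L.
set x := 2 * (ln (T%:R : R) / ln 2).
have x0 : 0 <= x by rewrite /x; apply: mulr_ge0; [L | apply: divr_ge0; L].
have c0 : (0 <= Num.ceil x)%R by rewrite ceil_ge0; L.
have hM : ((BS_M (R:=R) T)%:R : R) = (Num.ceil x)%:~R.
  by rewrite /BS_M -/x natr_absz ger0_norm.
have cge := ceil_ge x.
have clt := ceilB1_lt x.
rewrite intrB in clt.
split; last split.
- have hx : x * ln 2 = 2 * ln (T%:R : R) by rewrite /x; field; apply: lt0r_neq0.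
  have hlm : ln (T%:R : R) <= (BS_M (R:=R) T)%:R * ln 2.
    rewrite hM.
    have : x * ln 2 <= (Num.ceil x)%:~R * ln 2 by apply: ler_wpM2r; L.
    L.
  rewrite -[X in X <= _]lnK ?posrE //.
  rewrite -[X in _ <= X ^+ _](@lnK _ 2) ?posrE; last L.
  rewrite -expRM_natl ler_expR; exact: hlm.
- rewrite hM; L.
- by rewrite ler_pdivlMr // mul1r.
Qed.


Lemma LWD_ge0 (R : realType) (mu0 qhat : R) (h0 : 0 < mu0) (h1 : mu0 < qhat) (h2 : qhat < 1) :
  0 <= L_W mu0 qhat * (1 - alpha_min mu0 qhat).
Proof.
have am1 := amin_lt1 h0 h1 h2.
have m1 : 0 <= 1 - mu0 by L.
have d1 : 0 <= qhat - mu0 by L.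
rewrite /L_W; apply: mulr_ge0; last L.
apply: divr_ge0 => //.
apply: mulr_ge0; [exact: ltW | exact: exprn_ge0].
Qed.

Lemma LnuD_ge0 (R : realType) (mu0 qhat : R) (h0 : 0 < mu0) (h1 : mu0 < qhat) (h2 : qhat < 1) :
  0 <= L_nu mu0 qhat * (1 - alpha_min mu0 qhat).
Proof.
have am1 := amin_lt1 h0 h1 h2.
have m1 : 0 <= 1 - mu0 by L.
have d1 : 0 <= qhat - mu0 by L.
rewrite /L_nu; apply: mulr_ge0; last L.
apply: divr_ge0 => //; exact: exprn_ge0.
Qed.

Lemma part2 (R : realType) (mu0 qhat : R) (h0 : 0 < mu0) (h1 : mu0 < qhat) (h2 : qhat < 1)
  (T : nat) (astar : R) : (2 <= T)%N ->
      alpha_min mu0 qhat <= astar -> astar <= 1 ->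
      (regret mu0 qhat astar T <=
        ((BS_M (R:=R) T)%:R
         + L_nu mu0 qhat * (1 - alpha_min mu0 qhat) / nuB mu0 qhat astar
         + L_W mu0 qhat * (1 - alpha_min mu0 qhat))%:E)%E.
Proof.
move=> hT ha1 ha2.
have am0 := amin_gt0 h0 h1 h2; have am1 := amin_lt1 h0 h1 h2.
have a0 : 0 < astar by L.
have nuBa : 0 < nuB mu0 qhat astar.
  rewrite nuB_E //; apply: divr_gt0 => //; exact: g_gt0.
have [hpow [_ _]] := BSM_facts R hT.
rewrite /regret.
have H1 : ((T%:R : R)%:E * OPT mu0 qhat astar <= (T%:R : R)%:E * (tau_mass mu0 qhat astar)%:E)%E.
  by apply: lee_wpmul2l; [rewrite lee_fin | exact: OPT_le].
apply: le_trans (leeB H1 (lexx (BS_reward mu0 qhat astar T)%:E)) _.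
rewrite -EFinM -EFinB lee_fin /BS_reward.

move: hpow.
set M := BS_M (R:=R) T.
clearbody M => hpow.
have hw0 : 1 - alpha_min mu0 qhat <= (1 - alpha_min mu0 qhat) / 2 ^+ 0 by rewrite expr0 divr1.
have B := @bs_bound R mu0 qhat h0 h1 h2 astar ha1 ha2 M T (alpha_min mu0 qhat) 1 0
  (lexx _) ha1 ha2 (lexx _) (leq0n M) hw0.
rewrite subn0 in B.
have twoM : 0 < (2 : R) ^+ M by apply: exprn_gt0.
have LW0 := LWD_ge0 h0 h1 h2.
have hE : T%:R * (L_W mu0 qhat * (1 - alpha_min mu0 qhat) / 2 ^+ M)
    <= L_W mu0 qhat * (1 - alpha_min mu0 qhat).
  have t1 : T%:R / 2 ^+ M <= 1 :> R.
    by rewrite ler_pdivrMr // mul1r.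
  have -> : T%:R * (L_W mu0 qhat * (1 - alpha_min mu0 qhat) / 2 ^+ M)
     = L_W mu0 qhat * (1 - alpha_min mu0 qhat) * (T%:R / 2 ^+ M) by ring.
  rewrite -[X in _ <= X]mulr1; exact: ler_wpM2l.
have eqK : L_nu mu0 qhat / nuB mu0 qhat astar * (1 - alpha_min mu0 qhat)
   = L_nu mu0 qhat * (1 - alpha_min mu0 qhat) / nuB mu0 qhat astar by rewrite mulrAC.
rewrite eqK in B.
move: B hE; clear.
set X := bs_value _ _ _ _ _ _ _ _.
set Y := T%:R * _.
set Z := L_nu mu0 qhat * _ / _.
move=> B hE.
L.
Qed.

Lemma nuB_gt1 (R : realType) (mu0 qhat : R) (h0 : 0 < mu0) (h1 : mu0 < qhat) (h2 : qhat < 1) a :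
  0 < a -> a < alpha_min mu0 qhat -> 1 < nuB mu0 qhat a.
Proof.
move=> a0 ha; have E := amin_E h0 h1 h2.
have m1 : 0 < 1 - mu0 by L.
have h3 : a * (1 - mu0) < alpha_min mu0 qhat * (1 - mu0) by rewrite ltr_pM2r.
rewrite E in h3.
rewrite nuB_E // ltr_pdivlMr // mul1r.
L.
Qed.

Lemma nuB_geq (R : realType) (mu0 qhat : R) (h0 : 0 < mu0) (h1 : mu0 < qhat) (h2 : qhat < 1) a :
  0 < a -> a <= 1 -> qhat <= nuB mu0 qhat a.
Proof.
move=> a0 a1; rewrite nuB_E // ler_pdivlMr //.
have : (qhat - mu0) * a <= (qhat - mu0) * 1 by apply: ler_wpM2l; L.
L.
Qed.

Lemma part3 (R : realType) (mu0 qhat : R) (h0 : 0 < mu0) (h1 : mu0 < qhat) (h2 : qhat < 1)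
  (T : nat) (astar : R) : 0 < astar -> astar < alpha_min mu0 qhat ->
  regret mu0 qhat astar T = 0%E.
Proof.
move=> a0 ha.
have am1 := amin_lt1 h0 h1 h2.
have hm : 0 <= mu0 <= 1 by apply/andP; split; L.
rewrite /regret (OPT_zero hm a0 (nuB_gt1 h0 h1 h2 a0 ha)) mule0 /BS_reward.
rewrite (bs_zero h0 h1 h2 a0 ha) //; last exact: ltW.
by rewrite sube0.
Qed.

Theorem proposition3p1 (R : realType) (mu0 qhat : R) :
  0 < mu0 -> mu0 < qhat -> qhat < 1 ->
  (exists C : R, forall (T : nat) (astar : R), (2 <= T)%N -> 0 < astar <= 1 ->
      (regret mu0 qhat astar T <= (C * ln (T%:R : R))%:E)%E)
  /\
  (forall (T : nat) (astar : R), (2 <= T)%N ->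
      alpha_min mu0 qhat <= astar <= 1 ->
      (regret mu0 qhat astar T <=
        ((BS_M (R:=R) T)%:R
         + L_nu mu0 qhat * (1 - alpha_min mu0 qhat) / nuB mu0 qhat astar
         + L_W mu0 qhat * (1 - alpha_min mu0 qhat))%:E)%E)
  /\
  (forall (T : nat) (astar : R), (2 <= T)%N ->
      0 < astar -> astar < alpha_min mu0 qhat ->
      regret mu0 qhat astar T = 0%E).
Proof.
move=> h0 h1 h2.
have P2 : forall (T : nat) (astar : R), (2 <= T)%N ->
      alpha_min mu0 qhat <= astar <= 1 ->
      (regret mu0 qhat astar T <=
        ((BS_M (R:=R) T)%:R
         + L_nu mu0 qhat * (1 - alpha_min mu0 qhat) / nuB mu0 qhat astar
         + L_W mu0 qhat * (1 - alpha_min mu0 qhat))%:E)%E.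
  by move=> T a hT /andP[ha1 ha2]; exact: part2.
split; last split => //; last first.
  by move=> T a _ a0 ha; exact: part3.
have l2 : 0 < ln (2 : R) by apply: ln_gt0; L.
have qh0 : 0 < qhat by L.
have LW0 := LWD_ge0 h0 h1 h2.
have Ln0 := LnuD_ge0 h0 h1 h2.
set c0 := L_nu mu0 qhat * (1 - alpha_min mu0 qhat) / qhat + L_W mu0 qhat * (1 - alpha_min mu0 qhat).
have c00 : 0 <= c0.
  rewrite /c0; apply: addr_ge0 => //; apply: divr_ge0 => //; exact: ltW.
exists ((3 + c0) / ln 2) => T a hT /andP[a0 a1].
have [_ [hM hr]] := BSM_facts R hT.
have T2 : (2 : R) <= T%:R by rewrite ler_nat.
have lT0 : 0 <= ln (T%:R : R).
  by apply: ln_ge0; L.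
have [ha|ha] := leP (alpha_min mu0 qhat) a.
- apply: le_trans (P2 T a hT _) _; first by rewrite ha a1.
  rewrite lee_fin.
  have nq := nuB_geq h0 h1 h2 a0 a1.
  have nb : L_nu mu0 qhat * (1 - alpha_min mu0 qhat) / nuB mu0 qhat a
          <= L_nu mu0 qhat * (1 - alpha_min mu0 qhat) / qhat.
    apply: ler_wpM2l => //; rewrite lef_pV2 ?posrE //; L.
  set r := ln (T%:R : R) / ln 2 in hM hr.
  have -> : (3 + c0) / ln 2 * ln (T%:R : R) = (3 + c0) * r.
    by rewrite /r; field; apply: lt0r_neq0.
  have cr : c0 <= c0 * r by rewrite ler_peMr.
  move: hM hr nb cr; rewrite /c0; clear.
  move=> hM hr nb cr; L.
- rewrite part3 // lee_fin; apply: mulr_ge0 => //.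
  apply: divr_ge0; [L | exact: ltW].
Qed.
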